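(* Let $\{x_i\}_{i\in[N]}$ be the global solution of the delayed consensus system described in the context. Then for all $t\ge\tau$, \[ \max_{i\in[N]}|\dot x_i(t)|\le d_x(t-\tau)+\int_{t-\tau}^{t-\sigma}\max_{i\in[N]}|\dot x_i(s)|\,\mathrm ds. \]
   Context: Let $N\ge2$, $d\ge1$ be integers, $[N]=\{1,\dots,N\}$, $0\le\sigma\le\tau$. Let $\psi:[0,\infty)\to[0,\infty)$ be continuous, nonincreasing, positive everywhere, with $\sup\psi\le1$. Given $x_i^0\in C([-\tau,0],\mathbb{R}^d)$, $\{x_i\}$ is the global solution (continuous on $[-\tau,\infty)$, continuously differentiable on $[0,\infty)$, one-sided at $0$) of $\dot x_i(t)=\sum_{j\ne i}a_{ij}(t)(x_j(t-\tau)-x_i(t-\sigma))$ for $t>0$, with $a_{ij}(t)=\frac1{N-1}\psi(|x_i(t-\sigma)-x_j(t-\tau)|)$ and $x_i=x_i^0$ on $[-\tau,0]$. $d_x(t):=\max_{i,j\in[N]}|x_i(t)-x_j(t)|$. *)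

(* Defs.v *)
From Stdlib Require Import Reals.
From Coquelicot Require Import Coquelicot.
Open Scope R_scope.

(* Points of R^d are functions nat -> R, only components 0..d-1 matter.
   Agents are indexed by 0..N-1 (i.e. [N] shifted by one). *)

Fixpoint sumR (n : nat) (f : nat -> R) : R :=
  match n with O => 0 | S m => sumR m f + f m end.

(* maxR n f = max(0, f 0, ..., f (n-1)); used only for nonnegative f and n >= 1 *)
Fixpoint maxR (n : nat) (f : nat -> R) : R :=
  match n with O => 0 | S m => Rmax (maxR m f) (f m) end.

Definition enorm (d : nat) (u : nat -> R) : R := sqrt (sumR d (fun k => u k ^ 2)).

Definition vsub (u w : nat -> R) : nat -> R := fun k => u k - w k.

Definition diam (N d : nat) (x : nat -> R -> nat -> R) (t : R) : R :=
  maxR N (fun i => maxR N (fun j => enorm d (vsub (x i t) (x j t)))).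

Definition cont_within_ge (a : R) (f : R -> R) (t : R) : Prop :=
  forall eps, 0 < eps -> exists delta, 0 < delta /\
    forall s, a <= s -> Rabs (s - t) < delta -> Rabs (f s - f t) < eps.

Definition right_deriv (f : R -> R) (t l : R) : Prop :=
  filterlim (fun h => (f (t + h) - f t) / h) (at_right 0) (locally l).

Definition weight (N d : nat) (psi : R -> R) (sigma tau : R)
  (x : nat -> R -> nat -> R) (i j : nat) (t : R) : R :=
  / INR (N - 1) * psi (enorm d (vsub (x i (t - sigma)) (x j (t - tau)))).

Definition rhs (N d : nat) (psi : R -> R) (sigma tau : R)
  (x : nat -> R -> nat -> R) (i : nat) (t : R) (k : nat) : R :=
  sumR N (fun j => if Nat.eqb j i then 0
                   else weight N d psi sigma tau x i j t
                        * (x j (t - tau) k - x i (t - sigma) k)).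

(* Main.v *)
Require Import Defs.
From Stdlib Require Import Reals Lra Lia.
From Coquelicot Require Import Coquelicot.
Open Scope R_scope.

Lemma sumR_ext n f g : (forall k, (k < n)%nat -> f k = g k) -> sumR n f = sumR n g.
Proof. induction n; simpl; intros H; auto. rewrite IHn. rewrite H. reflexivity. lia. intros; apply H; lia. Qed.

Lemma sumR_le n f g : (forall k, (k < n)%nat -> f k <= g k) -> sumR n f <= sumR n g.
Proof. induction n; simpl; intros H; [lra|]. assert (sumR n f <= sumR n g) by (apply IHn; intros; apply H; lia).
 specialize (H n ltac:(lia)). lra. Qed.

Lemma sumR_plus n f g : sumR n (fun k => f k + g k) = sumR n f + sumR n g.
Proof. induction n; simpl; [lra|]. rewrite IHn; lra. Qed.

Lemma sumR_scal n c f : sumR n (fun k => c * f k) = c * sumR n f.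
Proof. induction n; simpl; [lra|]. rewrite IHn; lra. Qed.

Lemma sumR_swap n m (F : nat -> nat -> R) :
  sumR n (fun k => sumR m (fun j => F j k)) = sumR m (fun j => sumR n (fun k => F j k)).
Proof. induction n; simpl.
 - induction m; simpl; [lra|]. rewrite <- IHm; lra.
 - rewrite IHn. rewrite <- sumR_plus. reflexivity. Qed.

Lemma sumR_nonneg n f : (forall k, (k < n)%nat -> 0 <= f k) -> 0 <= sumR n f.
Proof. intros H. apply Rle_trans with (sumR n (fun _ => 0)).
 - clear. induction n; simpl; lra.
 - apply sumR_le; auto. Qed.

Lemma sumR_sq_zero n u w : sumR n (fun k => u k ^ 2) = 0 -> sumR n (fun k => u k * w k) = 0.
Proof. induction n; cbn [sumR]; intros H; auto.
 assert (0 <= sumR n (fun k => u k ^ 2)) by (apply sumR_nonneg; intros; nra).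
 assert (0 <= u n ^ 2) by nra.
 assert (u n = 0) by (destruct (Req_dec (u n) 0) as [?|Hn]; [assumption|exfalso; apply (pow_nonzero _ 2 Hn); lra]). rewrite IHn by lra. rewrite H2; lra. Qed.

Lemma count_ne n i : sumR n (fun j => if Nat.eqb j i then 0 else 1) = INR n - (if Nat.ltb i n then 1 else 0).
Proof. induction n; cbn [sumR]. simpl; lra. rewrite IHn.
 destruct (Nat.eqb_spec n i); destruct (Nat.ltb_spec i n); destruct (Nat.ltb_spec i (S n)); try lia; rewrite S_INR; lra. Qed.

Lemma maxR_ge0 n f : 0 <= maxR n f.
Proof. induction n; simpl; [lra|]. apply Rle_trans with (maxR n f); auto. apply Rmax_l. Qed.

Lemma maxR_ge n f i : (i < n)%nat -> f i <= maxR n f.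
Proof. induction n; simpl; intros H; [lia|]. destruct (Nat.eq_dec i n).
 - subst; apply Rmax_r.
 - apply Rle_trans with (maxR n f); [apply IHn; lia|apply Rmax_l]. Qed.

Lemma maxR_le n f c : 0 <= c -> (forall i, (i < n)%nat -> f i <= c) -> maxR n f <= c.
Proof. induction n; simpl; intros Hc H; auto. apply Rmax_lub; auto. Qed.

Definition inner d (u w : nat -> R) := sumR d (fun k => u k * w k).

Lemma enorm_ge0 d u : 0 <= enorm d u.
Proof. apply sqrt_pos. Qed.

Lemma sumsq_ge0 d u : 0 <= sumR d (fun k => u k ^ 2).
Proof. apply sumR_nonneg; intros; nra. Qed.

Lemma enorm_sq d u : enorm d u * enorm d u = inner d u u.
Proof. unfold enorm, inner. rewrite sqrt_sqrt by apply sumsq_ge0. apply sumR_ext; intros; ring. Qed.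

Lemma CS d u w : inner d u w <= enorm d u * enorm d w.
Proof.
 set (A := sumR d (fun k => u k ^ 2)). set (B := sumR d (fun k => w k ^ 2)).
 assert (HA: 0 <= A) by apply sumsq_ge0. assert (HB: 0 <= B) by apply sumsq_ge0.
 unfold enorm; fold A B. set (a := sqrt A). set (b := sqrt B).
 assert (a*a = A) by (apply sqrt_sqrt; auto). assert (b*b = B) by (apply sqrt_sqrt; auto).
 assert (0 <= a) by apply sqrt_pos. assert (0 <= b) by apply sqrt_pos.
 destruct (Req_dec a 0) as [Ha|Ha].
 { unfold inner. rewrite sumR_sq_zero; [nra|]. fold A; nra. }
 destruct (Req_dec b 0) as [Hb|Hb].
 { unfold inner. rewrite (sumR_ext _ _ (fun k => w k * u k)) by (intros; ring). rewrite sumR_sq_zero; [nra|]. fold B; nra. }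
 assert (2 * (a*b) * inner d u w <= 2 * (a*a) * (b*b)).
 { unfold inner. rewrite <- sumR_scal.
   apply Rle_trans with (sumR d (fun k => u k ^ 2 * (b*b) + w k ^ 2 * (a*a))).
   - apply sumR_le; intros. pose proof (pow2_ge_0 (u k * b - w k * a)). nra.
   - rewrite sumR_plus.
     rewrite (sumR_ext _ (fun k => u k ^ 2 * (b*b)) (fun k => b*b * u k ^2)) by (intros; ring).
     rewrite (sumR_ext _ (fun k => w k ^ 2 * (a*a)) (fun k => a*a * w k ^2)) by (intros; ring).
     rewrite !sumR_scal. fold A B. nra. }
 assert (0 < a*b) by (apply Rmult_lt_0_compat; lra).
 nra. Qed.

Lemma CSneg d u w : - inner d u w <= enorm d u * enorm d w.
Proof. replace (enorm d w) with (enorm d (fun k => - w k)).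
 - replace (- inner d u w) with (inner d u (fun k => - w k)). apply CS.
   unfold inner. replace (- sumR d (fun k => u k * w k)) with (-1 * sumR d (fun k => u k * w k)) by ring. rewrite <- sumR_scal. apply sumR_ext; intros; ring.
 - unfold enorm. f_equal. apply sumR_ext; intros; ring. Qed.

Lemma le_from_sq e c : 0 <= e -> 0 <= c -> e * e <= e * c -> e <= c.
Proof. intros. destruct (Req_dec e 0); [lra|]. nra. Qed.

Lemma tri d p q : enorm d (fun k => p k - q k) <= enorm d p + enorm d q.
Proof. set (z := fun k => p k - q k). apply le_from_sq. apply enorm_ge0.
 pose proof (enorm_ge0 d p); pose proof (enorm_ge0 d q); lra.
 rewrite enorm_sq. replace (inner d z z) with (inner d z p - inner d z q).
 - pose proof (CS d z p). pose proof (CSneg d z q). lra.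
 - unfold inner. replace (sumR d (fun k => z k * p k) - sumR d (fun k => z k * q k)) with (sumR d (fun k => z k * p k) + -1 * sumR d (fun k => z k * q k)) by ring. rewrite <- sumR_scal, <- sumR_plus.
   apply sumR_ext; intros; unfold z; ring. Qed.

Lemma ballR (x e y : R) : ball x e y <-> Rabs (y - x) < e.
Proof. split; intro H; exact H. Qed.

Lemma cont_ed (f : R -> R) x : continuous f x ->
  forall eps, 0 < eps -> exists delta, 0 < delta /\ forall y, Rabs (y - x) < delta -> Rabs (f y - f x) < eps.
Proof. intros H eps He. pose proof (proj1 (filterlim_locally f (f x)) H (mkposreal eps He)) as [del Hd].
 exists del. split. apply cond_pos. intros y Hy. apply Hd. exact Hy. Qed.

Lemma ed_cont (f : R -> R) x :
  (forall eps, 0 < eps -> exists delta, 0 < delta /\ forall y, Rabs (y - x) < delta -> Rabs (f y - f x) < eps) ->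
  continuous f x.
Proof. intros H. apply filterlim_locally. intros eps. destruct (H eps (cond_pos eps)) as [del [Hd H']].
 exists (mkposreal del Hd). intros y Hy. apply H'. exact Hy. Qed.

Lemma Rmax_lip a s t : Rabs (Rmax s a - Rmax t a) <= Rabs (s - t).
Proof. unfold Rmax. destruct (Rle_dec s a); destruct (Rle_dec t a);
 unfold Rabs; repeat destruct Rcase_abs; lra. Qed.

Lemma ext_cont a f : (forall s, a <= s -> cont_within_ge a f s) ->
  forall s0, continuous (fun s => f (Rmax s a)) s0.
Proof. intros H s0. apply ed_cont. intros eps He.
 destruct (H (Rmax s0 a) (Rmax_r _ _) eps He) as [del [Hd H']].
 exists del. split; auto. intros y Hy. apply H'. apply Rmax_r.
 pose proof (Rmax_lip a y s0). lra. Qed.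

Lemma within_cont a f s : a < s -> cont_within_ge a f s -> continuous f s.
Proof. intros Ha H. apply ed_cont. intros eps He. destruct (H eps He) as [del [Hd H']].
 exists (Rmin del (s - a)). split. apply Rmin_glb_lt; lra.
 intros y Hy. apply H'. 2: pose proof (Rmin_l del (s-a)); lra.
 pose proof (Rmin_r del (s-a)). unfold Rabs in Hy; destruct Rcase_abs in Hy; lra. Qed.

Lemma cont_plus (f g : R -> R) x : continuous f x -> continuous g x -> continuous (fun s => f s + g s) x.
Proof. intros. apply (continuous_plus f g); auto. Qed.
Lemma cont_mult (f g : R -> R) x : continuous f x -> continuous g x -> continuous (fun s => f s * g s) x.
Proof. intros. apply (continuous_mult f g); auto. Qed.
Lemma cont_minus (f g : R -> R) x : continuous f x -> continuous g x -> continuous (fun s => f s - g s) x.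
Proof. intros. apply (cont_plus f (fun s => -1 * g s)) in H.
 - eapply continuous_ext; [|exact H]. intros; simpl; ring.
 - apply cont_mult; auto. apply continuous_const. Qed.

Lemma cont_sumR n (F : nat -> R -> R) x : (forall k, (k < n)%nat -> continuous (F k) x) ->
  continuous (fun s => sumR n (fun k => F k s)) x.
Proof. induction n; intros H; simpl. apply continuous_const.
 apply cont_plus. apply IHn; intros; apply H; lia. apply H; lia. Qed.

Lemma cont_sqrt (f : R -> R) x : continuous f x -> 0 <= f x -> continuous (fun s => sqrt (f s)) x.
Proof. intros H Hp. apply (continuous_comp f sqrt); auto. apply continuity_pt_filterlim.
 apply continuity_pt_sqrt; auto. Qed.

Lemma cont_enorm d (u : R -> nat -> R) x : (forall k, (k < d)%nat -> continuous (fun s => u s k) x) ->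
  continuous (fun s => enorm d (u s)) x.
Proof. intros H. unfold enorm. apply cont_sqrt. 2: apply sumsq_ge0.
 apply (cont_sumR d (fun k s => u s k ^ 2)). intros k Hk. simpl.
 apply cont_mult. auto. apply cont_mult. auto. apply continuous_const. Qed.

Lemma Rmax_formula p q : Rmax p q = (p + q + Rabs (p - q)) / 2.
Proof. unfold Rmax; destruct Rle_dec; unfold Rabs; destruct Rcase_abs; lra. Qed.

Lemma cont_Rmax (f g : R -> R) x : continuous f x -> continuous g x -> continuous (fun s => Rmax (f s) (g s)) x.
Proof. intros Hf Hg. eapply continuous_ext. intros; symmetry; apply Rmax_formula.
 apply cont_mult. 2: apply continuous_const. apply cont_plus. apply cont_plus; auto.
 apply continuous_Rabs_comp. apply cont_minus; auto. Qed.

Lemma cont_maxR n (F : nat -> R -> R) x : (forall k, (k < n)%nat -> continuous (F k) x) ->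
  continuous (fun s => maxR n (fun k => F k s)) x.
Proof. induction n; intros H; simpl. apply continuous_const.
 apply cont_Rmax. apply IHn; intros; apply H; lia. apply H; lia. Qed.

Lemma derive_sumR n (F F' : nat -> R -> R) x : (forall k, (k < n)%nat -> is_derive (F k) x (F' k x)) ->
  is_derive (fun s => sumR n (fun k => F k s)) x (sumR n (fun k => F' k x)).
Proof. induction n; intros H; simpl. apply (is_derive_const (0:R) x).
 apply (is_derive_plus (fun s => sumR n (fun k => F k s)) (F n)). apply IHn; intros; apply H; lia. apply H; lia. Qed.

Lemma ftc_bound (g g' h G : R -> R) a b :
  0 <= a -> a <= b ->
  (forall s, 0 < s -> is_derive g s (g' s)) ->
  (forall s, 0 < s -> continuous g' s) ->
  (forall s, 0 < s -> g' s <= h s) ->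
  (forall s, continuous h s) ->
  (forall s, 0 <= s -> 0 <= h s) ->
  continuous G a -> (forall s, a <= s -> G s = g s) ->
  g b - g a <= RInt h a b.
Proof.
 intros Ha Hab Hd Hc Hle Hh Hh0 HG HGg.
 destruct (Req_dec a b) as [E|E].
 { subst. rewrite RInt_point. change (g b - g b <= 0). lra. }
 apply Rle_plus_epsilon. intros eps He.
 destruct (cont_ed G a HG eps He) as [del [Hdel Hdd]].
 set (a' := a + Rmin del (b - a) / 2).
 assert (Hm1 := Rmin_l del (b-a)). assert (Hm2 := Rmin_r del (b-a)).
 assert (0 < Rmin del (b-a)) by (apply Rmin_glb_lt; lra).
 assert (Ha1 : a < a') by (unfold a'; lra). assert (Ha2 : a' < b) by (unfold a'; lra).
 assert (Hga : Rabs (g a' - g a) < eps).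
 { rewrite <- (HGg a') by lra. rewrite <- (HGg a) by lra. apply Hdd. unfold a'.
   rewrite Rabs_right; lra. }
 assert (HI : @is_RInt R_CompleteNormedModule g' a' b (minus (g b) (g a'))).
 { apply (@is_RInt_derive R_CompleteNormedModule); rewrite Rmin_left, Rmax_right by lra; intros; [apply Hd|apply Hc]; lra. }
 assert (HI' := is_RInt_unique _ _ _ _ HI). change (RInt g' a' b = g b - g a') in HI'.
 assert (Hex : forall p q, @ex_RInt R_CompleteNormedModule h p q) by (intros; apply (@ex_RInt_continuous R_CompleteNormedModule); auto).
 assert (RInt g' a' b <= RInt h a' b).
 { apply RInt_le. lra. exists (minus (g b) (g a')); exact HI. auto. intros; apply Hle; lra. }
 assert (0 <= RInt h a a').
 { apply RInt_ge_0. lra. auto. intros; apply Hh0; lra. }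
 assert (HC := @RInt_Chasles R_CompleteNormedModule h a a' b (Hex _ _) (Hex _ _)).
 change (RInt h a a' + RInt h a' b = RInt h a b) in HC.
 apply Rabs_def2 in Hga. lra. Qed.

Lemma enorm_ext d u w : (forall k, (k < d)%nat -> u k = w k) -> enorm d u = enorm d w.
Proof. intros H; unfold enorm; f_equal; apply sumR_ext; intros; rewrite H; auto. Qed.

Lemma int_bound (xi vi : R -> nat -> R) d a b c (nv : R -> R) :
  c <= a -> 0 <= a -> a <= b ->
  (forall k t, (k < d)%nat -> 0 < t -> is_derive (fun s => xi s k) t (vi t k)) ->
  (forall k t, (k < d)%nat -> 0 < t -> continuous (fun s => vi s k) t) ->
  (forall k, (k < d)%nat -> continuous (fun s => xi (Rmax s c) k) a) ->
  (forall s, continuous nv s) -> (forall s, 0 <= s -> 0 <= nv s) ->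
  (forall s, 0 < s -> enorm d (vi s) <= nv s) ->
  enorm d (vsub (xi b) (xi a)) <= RInt nv a b.
Proof.
 intros Hca Ha Hab Hd Hc Hx Hn Hn0 Hle.
 set (e := vsub (xi b) (xi a)).
 assert (Hex : @ex_RInt R_CompleteNormedModule nv a b) by (apply (@ex_RInt_continuous R_CompleteNormedModule); auto).
 assert (HR : 0 <= RInt nv a b) by (apply RInt_ge_0; auto; intros; apply Hn0; lra).
 apply le_from_sq; auto. apply enorm_ge0.
 assert (H := ftc_bound (fun s => sumR d (fun k => e k * xi s k)) (fun s => inner d e (vi s))
   (fun s => enorm d e * nv s) (fun s => sumR d (fun k => e k * xi (Rmax s c) k)) a b Ha Hab).
 assert (HS : RInt (fun s => enorm d e * nv s) a b = enorm d e * RInt nv a b)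
   by exact (@RInt_scal R_CompleteNormedModule nv a b (enorm d e) Hex).
 rewrite HS in H.
 replace (enorm d e * enorm d e) with (sumR d (fun k => e k * xi b k) - sumR d (fun k => e k * xi a k)).
 apply H.
 - intros s Hs. apply (derive_sumR d (fun k s => e k * xi s k) (fun k s => e k * vi s k)).
   intros k Hk. apply is_derive_scal. apply Hd; auto.
 - intros s Hs. apply (cont_sumR d (fun k s => e k * vi s k)). intros k Hk.
   apply cont_mult. apply continuous_const. apply Hc; auto.
 - intros s Hs. apply Rle_trans with (enorm d e * enorm d (vi s)). apply CS.
   apply Rmult_le_compat_l. apply enorm_ge0. auto.
 - intros s. apply cont_mult. apply continuous_const. auto.
 - intros s Hs. apply Rmult_le_pos. apply enorm_ge0. auto.
 - apply (cont_sumR d (fun k s => e k * xi (Rmax s c) k)). intros k Hk.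
   apply cont_mult. apply continuous_const. apply Hx; auto.
 - intros s Hs. rewrite Rmax_left by lra. reflexivity.
 - rewrite enorm_sq. unfold inner. replace (sumR d (fun k => e k * xi b k) - sumR d (fun k => e k * xi a k))
   with (sumR d (fun k => e k * xi b k) + -1 * sumR d (fun k => e k * xi a k)) by ring.
   rewrite <- sumR_scal, <- sumR_plus. apply sumR_ext. intros; unfold e, vsub; ring.
Qed.

Lemma sumR_zero n : sumR n (fun _ => 0) = 0.
Proof. induction n; simpl; lra. Qed.

Theorem lemma3p1 (N d : nat) (sigma tau : R) (psi : R -> R)
  (x v : nat -> R -> nat -> R) :
  (2 <= N)%nat -> (1 <= d)%nat ->
  0 <= sigma -> sigma <= tau ->
  (forall r, 0 <= r -> cont_within_ge 0 psi r) ->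
  (forall r s, 0 <= r -> r <= s -> psi s <= psi r) ->
  (forall r, 0 <= r -> 0 < psi r) ->
  (forall r, 0 <= r -> psi r <= 1) ->
  (forall i k t, (i < N)%nat -> (k < d)%nat -> -tau <= t ->
     cont_within_ge (-tau) (fun s => x i s k) t) ->
  (forall i k t, (i < N)%nat -> (k < d)%nat -> 0 < t ->
     is_derive (fun s => x i s k) t (v i t k)) ->
  (forall i k, (i < N)%nat -> (k < d)%nat ->
     right_deriv (fun s => x i s k) 0 (v i 0 k)) ->
  (forall i k t, (i < N)%nat -> (k < d)%nat -> 0 <= t ->
     cont_within_ge 0 (fun s => v i s k) t) ->
  (forall i k t, (i < N)%nat -> (k < d)%nat -> 0 < t ->
     v i t k = rhs N d psi sigma tau x i t k) ->
  forall t, tau <= t ->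
    maxR N (fun i => enorm d (v i t))
    <= diam N d x (t - tau)
       + RInt (fun s => maxR N (fun i => enorm d (v i s))) (t - tau) (t - sigma).
Proof.
 intros HN Hd Hs Hst Hpc Hpm Hpp Hp1 Hxc Hxd Hxr Hvc Hsys.
 set (nv := fun s => maxR N (fun i => enorm d (v i s))).
 set (nt := fun s => nv (Rmax s 0)).
 assert (Hvcont : forall i k s, (i < N)%nat -> (k < d)%nat -> continuous (fun s => v i (Rmax s 0) k) s).
 { intros i k s Hi Hk. apply (ext_cont 0 (fun s => v i s k)). intros; apply Hvc; auto. }
 assert (Hxcont : forall i k s, (i < N)%nat -> (k < d)%nat -> continuous (fun s => x i (Rmax s (-tau)) k) s).
 { intros i k s Hi Hk. apply (ext_cont (-tau) (fun s => x i s k)). intros; apply Hxc; auto. }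
 assert (Hnt : forall s, continuous nt s).
 { intros s. unfold nt, nv. apply (cont_maxR N (fun i s => enorm d (v i (Rmax s 0)))).
   intros i Hi. apply (cont_enorm d (fun s => v i (Rmax s 0))). intros; apply Hvcont; auto. }
 assert (Hnt0 : forall s, 0 <= nt s) by (intros; apply maxR_ge0).
 assert (HIeq : forall a b, 0 <= a -> a <= b -> RInt nv a b = RInt nt a b).
 { intros a b Ha Hab. apply RInt_ext. intros y Hy. unfold nt. rewrite Rmax_left; auto.   rewrite Rmin_left in Hy by lra. lra. }
 assert (HIpos : forall a b, 0 <= a -> a <= b -> 0 <= RInt nv a b).
 { intros a b Ha Hab. rewrite HIeq by auto. apply RInt_ge_0; auto.
   apply (@ex_RInt_continuous R_CompleteNormedModule); auto. }
 assert (Main : forall t', 0 < t' -> tau <= t' -> forall i, (i < N)%nat ->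
     enorm d (v i t') <= diam N d x (t' - tau) + RInt nv (t' - tau) (t' - sigma)).
 { intros t' Ht' Htt i Hi.
   set (a := t' - tau). set (b := t' - sigma).
   set (C := diam N d x a + RInt nv a b).
   assert (HC0 : 0 <= C). { unfold C. pose proof (maxR_ge0 N (fun i => maxR N (fun j => enorm d (vsub (x i a) (x j a))))).
     pose proof (HIpos a b ltac:(unfold a; lra) ltac:(unfold a, b; lra)). unfold diam. lra. }
   assert (Hy : forall j, (j < N)%nat -> enorm d (fun k => x j a k - x i b k) <= C).
   { intros j Hj.
     rewrite (enorm_ext d _ (fun k => vsub (x j a) (x i a) k - vsub (x i b) (x i a) k)) by (intros; unfold vsub; ring).
     eapply Rle_trans. apply tri. unfold C. apply Rplus_le_compat.
     - unfold diam. eapply Rle_trans. 2: apply (maxR_ge N _ j Hj). simpl.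
       apply (maxR_ge N (fun j0 => enorm d (vsub (x j a) (x j0 a))) i Hi).
     - rewrite (HIeq a b) by (unfold a, b; lra).
       apply (int_bound (x i) (v i) d a b (-tau) nt); try (unfold a, b; lra).
       + intros; apply Hxd; auto.
       + intros k s Hk Hs'. apply (within_cont 0 (fun s => v i s k)). auto. apply Hvc; auto; lra.
       + intros; apply Hxcont; auto.
       + auto.
       + intros; auto.
       + intros s Hs'. unfold nt, nv. rewrite Rmax_left by lra. apply (maxR_ge N (fun i => enorm d (v i s))). auto. }
   set (z := v i t').
   apply le_from_sq. apply enorm_ge0. auto.
   rewrite enorm_sq. unfold inner.
   rewrite (sumR_ext d _ (fun k => z k * rhs N d psi sigma tau x i t' k)) by (intros; unfold z; rewrite Hsys; auto).
   unfold rhs. rewrite (sumR_ext d _ (fun k => sumR N (fun j => z k * (if Nat.eqb j i then 0 else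
       weight N d psi sigma tau x i j t' * (x j (t' - tau) k - x i (t' - sigma) k))))) by (intros; symmetry; apply sumR_scal).
   rewrite sumR_swap.
   set (c := / INR (N - 1)).
   assert (Hc : 0 < c). { unfold c. apply Rinv_0_lt_compat. apply lt_0_INR. lia. }
   apply Rle_trans with (sumR N (fun j => (if Nat.eqb j i then 0 else 1) * (c * (enorm d z * C)))).
   - apply sumR_le. intros j Hj. destruct (Nat.eqb j i).
     + rewrite (sumR_ext d _ (fun _ => 0)) by (intros; ring). rewrite sumR_zero. lra.
     + set (W := weight N d psi sigma tau x i j t').
       rewrite (sumR_ext d _ (fun k => W * (z k * (fun k => x j a k - x i b k) k))) by (intros; simpl; unfold a, b; ring).
       rewrite sumR_scal. fold (inner d z (fun k => x j a k - x i b k)).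
       assert (HW0 : 0 <= W). { unfold W, weight. fold c. apply Rmult_le_pos. lra. apply Rlt_le, Hpp, enorm_ge0. }
       assert (HW1 : W <= c). { unfold W, weight. fold c. pose proof (Hp1 _ (enorm_ge0 d (vsub (x i (t' - sigma)) (x j (t' - tau))))). nra. }
       pose proof (CS d z (fun k => x j a k - x i b k)). pose proof (Hy j Hj).
       pose proof (enorm_ge0 d z).
       assert (enorm d z * enorm d (fun k => x j a k - x i b k) <= enorm d z * C) by (apply Rmult_le_compat_l; auto).
       assert (0 <= enorm d z * C) by (apply Rmult_le_pos; auto).
       assert (W * inner d z (fun k => x j a k - x i b k) <= W * (enorm d z * C)).
       { apply Rmult_le_compat_l; auto. lra. }
       nra.
   - rewrite (sumR_ext N _ (fun j => (c * (enorm d z * C)) * (if Nat.eqb j i then 0 else 1))) by (intros; ring).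
     rewrite sumR_scal, count_ne.
     destruct (Nat.ltb_spec i N); [|lia].
     unfold c. rewrite minus_INR by lia. simpl INR at 2.
     assert (INR N - 1 > 0). { assert (INR 2 <= INR N) by (apply le_INR; auto). simpl in H0. lra. }
     field_simplify; lra. }
 intros t Ht.
 assert (HD0 : 0 <= diam N d x (t - tau)) by apply maxR_ge0.
 apply maxR_le. { pose proof (HIpos (t - tau) (t - sigma) ltac:(lra) ltac:(lra)). fold nv. lra. }
 intros i Hi.
 destruct (Rlt_or_le 0 t) as [Ht0|Ht0]. { apply Main; auto. }
 assert (tau = 0) by lra. assert (sigma = 0) by lra. assert (t = 0) by lra. subst.
 replace (0 - 0) with 0 by ring. rewrite RInt_point. change (enorm d (v i 0) <= diam N d x 0 + 0).
 rewrite Rplus_0_r. apply Rnot_lt_le. intros Hlt.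
 set (eps := (enorm d (v i 0) - diam N d x 0) / 2).
 assert (He : 0 < eps) by (unfold eps; lra).
 assert (Hf := cont_ed _ 0 (cont_enorm d (fun s => v i (Rmax s 0)) 0 ltac:(intros; apply Hvcont; auto)) eps He).
 assert (HD : continuous (fun s => diam N d x (Rmax s (-0))) 0).
 { unfold diam. apply (cont_maxR N (fun i s => maxR N (fun j => enorm d (vsub (x i (Rmax s (-0))) (x j (Rmax s (-0))))))).
   intros i' Hi'. apply (cont_maxR N (fun j s => enorm d (vsub (x i' (Rmax s (-0))) (x j (Rmax s (-0)))))).
   intros j Hj. apply (cont_enorm d (fun s => vsub (x i' (Rmax s (-0))) (x j (Rmax s (-0))))).
   intros k Hk. unfold vsub. apply cont_minus; apply Hxcont; auto. }
 destruct Hf as [d1 [Hd1 Hf]]. destruct (cont_ed _ 0 HD eps He) as [d2 [Hd2 HD']].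
 set (s := Rmin d1 d2 / 2).
 assert (0 < Rmin d1 d2) by (apply Rmin_glb_lt; lra).
 assert (Hs0 : 0 < s) by (unfold s; lra).
 assert (Hs1 : Rabs (s - 0) < d1) by (rewrite Rabs_right; unfold s; pose proof (Rmin_l d1 d2); lra).
 assert (Hs2 : Rabs (s - 0) < d2) by (rewrite Rabs_right; unfold s; pose proof (Rmin_r d1 d2); lra).
 specialize (Hf s Hs1). specialize (HD' s Hs2).
 rewrite Ropp_0, !Rmax_left in HD' by lra. rewrite !Rmax_left in Hf by lra.
 apply Rabs_def2 in Hf. apply Rabs_def2 in HD'.
 pose proof (Main s Hs0 ltac:(lra) i Hi) as HM.
 replace (s - 0) with s in HM by ring. rewrite RInt_point in HM. change (enorm d (v i s) <= diam N d x s + 0) in HM.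
 unfold eps in *. lra.
Qed.
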